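(* Let $\mathcal V\subseteq B(H)$ be an operator system and suppose $p\in\mathcal V$ is a projection in $B(H)$. Then $\{C(p_n)\}_n$ is a (not necessarily proper) matrix ordering on $\mathcal V$. Furthermore, if $q\in\mathcal V$ satisfies $p\le q\le I$, then $q$ is an Archimedean matrix order unit for $(\mathcal V,\{C(p_n)\}_n)$.
   Context: $p_n=I_n\otimes p$ and $C(p_n)=\{x\in M_n(\mathcal V): x=x^*,\ p_nxp_n\ge0\text{ in }B(H^n)\}$. A (not necessarily proper) matrix ordering is a sequence of cones $D_n\subseteq M_n(\mathcal V)_h$ with $\alpha^*D_n\alpha\subseteq D_m$ for all $\alpha\in M_{n,m}$. An element $u$ is an Archimedean matrix order unit for $\{D_n\}$ if for every hermitian $x\in M_n(\mathcal V)$ there is $r>0$ with $ru_n-x\in D_n$ ($u_n=I_n\otimes u$), and $x+\epsilon u_n\in D_n$ for all $\epsilon>0$ implies $x\in D_n$. *)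

(* Defs.v *)
From mathcomp Require Import all_boot all_order all_algebra.
From mathcomp Require Import reals.
From mathcomp.real_closed Require Import complex.
Set Implicit Arguments. Unset Strict Implicit. Unset Printing Implicit Defensive.
Import Order.TTheory GRing.Theory Num.Theory.
Local Open Scope ring_scope.
Local Open Scope complex_scope.

Section Defs.
Variable R : realType.
Local Notation C := R[i].

Record hilbert (H : lmodType C) := Hilbert {
  ip : H -> H -> C;
  ip_linl : forall (a : C) (x y z : H), ip (a *: x + y) z = a * ip x z + ip y z;
  ip_conj : forall x y : H, ip y x = (ip x y)^*;
  ip_ge0 : forall x : H, 0 <= ip x x;
  ip_eq0 : forall x : H, ip x x = 0 -> x = 0;
  ip_complete : forall u : nat -> H,
    (forall eps : R, 0 < eps -> exists N : nat, forall m n : nat,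
        (N <= m)%N -> (N <= n)%N -> ip (u m - u n) (u m - u n) < eps%:C) ->
    exists l : H, forall eps : R, 0 < eps -> exists N : nat, forall n : nat,
        (N <= n)%N -> ip (u n - l) (u n - l) < eps%:C
}.

Variables (H : lmodType C) (Hs : hilbert H).

(* (not necessarily bounded) maps H -> H; elements of B(H) are the
   bounded linear ones *)
Definition op := H -> H.

Definition is_linear_op (T : op) :=
  forall (a : C) (x y : H), T (a *: x + y) = a *: T x + T y.

Definition is_bounded_op (T : op) :=
  exists M : R, forall x : H, ip Hs (T x) (T x) <= M%:C * ip Hs x x.

Definition in_BH (T : op) := is_linear_op T /\ is_bounded_op T.

Definition is_adj (T S : op) := forall x y : H, ip Hs (T x) y = ip Hs x (S y).

Definition op_id : op := fun x => x.
Definition op_add (T S : op) : op := fun x => T x + S x.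
Definition op_scale (a : C) (T : op) : op := fun x => a *: T x.

Definition op_pos (T : op) := forall x : H, 0 <= ip Hs (T x) x.
Definition op_le (T S : op) := op_pos (op_add S (op_scale (-1) T)).

Definition operator_system (V : op -> Prop) :=
  [/\ forall T, V T -> in_BH T,
      V op_id,
      forall T S, V T -> V S -> V (op_add T S),
      forall (a : C) T, V T -> V (op_scale a T)
    & forall T, V T -> exists2 S, V S & is_adj T S].

Definition projection (p : op) :=
  [/\ in_BH p, forall x, p (p x) = p x & is_adj p p].

(* n x n matrices of operators, acting on H^n *)
Definition opmx (n : nat) := 'I_n -> 'I_n -> op.

Definition in_Mn (V : op -> Prop) n (X : opmx n) := forall i j, V (X i j).

Definition hermitian n (X : opmx n) := forall i j, is_adj (X i j) (X j i).

Definition mx_add n (X Y : opmx n) : opmx n := fun i j => op_add (X i j) (Y i j).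
Definition mx_scale n (a : C) (X : opmx n) : opmx n := fun i j => op_scale a (X i j).

Definition ampl (u : op) n : opmx n :=
  fun i j => if i == j then u else (fun _ => 0).
Arguments ampl : clear implicits.

(* alpha^* X alpha, for alpha in M_{n,m}(C) *)
Definition congr_mx n m (alpha : 'M[C]_(n, m)) (X : opmx n) : opmx m :=
  fun k l x => \sum_(i < n) \sum_(j < n) (((alpha i k)^* * alpha j l) *: X i j x).

(* positivity of X as an operator on H^n *)
Definition mx_pos n (X : opmx n) :=
  forall v : 'I_n -> H, 0 <= \sum_(i < n) ip Hs (\sum_(j < n) X i j (v j)) (v i).

(* C(p_n) = { x in M_n(V) : x = x^*, p_n x p_n >= 0 in B(H^n) } *)
Definition Cp (V : op -> Prop) (p : op) n (X : opmx n) :=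
  [/\ in_Mn V X, hermitian X & mx_pos (fun i j x => p (X i j (p x)))].

Definition is_cone n (D : opmx n -> Prop) :=
  (forall X Y, D X -> D Y -> D (mx_add X Y)) /\
  (forall (t : R) X, 0 <= t -> D X -> D (mx_scale t%:C X)).

Definition matrix_ordering (V : op -> Prop) (D : forall n, opmx n -> Prop) :=
  [/\ forall n X, D n X -> in_Mn V X /\ hermitian X,
      forall n, is_cone (D n)
    & forall n m (alpha : 'M[C]_(n, m)) X, D n X -> D m (congr_mx alpha X)].

Definition archimedean_unit (V : op -> Prop) (D : forall n, opmx n -> Prop) (u : op) :=
  (forall n (X : opmx n), in_Mn V X -> hermitian X ->
     exists2 r : R, 0 < r & D n (mx_add (mx_scale r%:C (ampl u n)) (mx_scale (-1) X))) /\
  (forall n (X : opmx n), in_Mn V X -> hermitian X ->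
     (forall eps : R, 0 < eps -> D n (mx_add X (mx_scale eps%:C (ampl u n)))) -> D n X).

End Defs.

(* Main.v *)
Require Import Defs.
From mathcomp Require Import all_boot all_order all_algebra.
From mathcomp Require Import reals.
From mathcomp.real_closed Require Import complex.
From Stdlib Require Import FunctionalExtensionality ClassicalEpsilon.
From mathcomp Require Import ring lra.
Set Implicit Arguments. Unset Strict Implicit. Unset Printing Implicit Defensive.
Import Order.TTheory GRing.Theory Num.Theory.
Local Open Scope ring_scope.
Local Open Scope complex_scope.

Section Aux.
Variables (R : realType) (H : lmodType R[i]) (Hs : hilbert H).
Local Notation ip := (ip Hs).
Local Notation Re := (@complex.Re R).
Local Notation Im := (@complex.Im R).

Lemma ip0l y : ip 0 y = 0.
Proof.
have := ip_linl Hs 1 0 0 y. rewrite scale1r addr0 mul1r => h.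
by apply: (@addrI _ (ip 0 y)); rewrite -h addr0.
Qed.

Lemma ipDl x y z : ip (x + y) z = ip x z + ip y z.
Proof. by have := ip_linl Hs 1 x y z; rewrite scale1r mul1r. Qed.

Lemma ipZl a x z : ip (a *: x) z = a * ip x z.
Proof. by have := ip_linl Hs a x 0 z; rewrite addr0 ip0l addr0. Qed.

Lemma cconjD (a b : R[i]) : (a + b)^* = a^* + b^*.
Proof. by case: a; case: b => /= *; rewrite opprD. Qed.
Lemma cconjM (a b : R[i]) : (a * b)^* = a^* * b^*.
Proof. by case: a; case: b => /= *; congr (_ +i* _); rewrite ?mulrN ?mulNr ?opprK ?opprD //. Qed.

Lemma conj_aux (a b : R[i]) : a^* * b = (b^* * a)^*.
Proof. by case: a => a1 a2; case: b => b1 b2 /=; congr (_ +i* _); ring. Qed.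

Lemma ipJ x y : ip x y = (ip y x)^*.
Proof. exact: ip_conj. Qed.

Lemma ip0r y : ip y 0 = 0.
Proof. by rewrite ipJ ip0l conjc0. Qed.

Lemma ipDr x y z : ip x (y + z) = ip x y + ip x z.
Proof. by rewrite ipJ ipDl cconjD (ipJ x y) (ipJ x z). Qed.

Lemma ipZr a x z : ip x (a *: z) = a^* * ip x z.
Proof. by rewrite ipJ ipZl cconjM (ipJ x z). Qed.

Lemma ip_suml (I : Type) (r : seq I) (P : pred I) (F : I -> H) y :
  ip (\sum_(i <- r | P i) F i) y = \sum_(i <- r | P i) ip (F i) y.
Proof. exact: (big_morph (fun x => ip x y) (fun a b => ipDl a b y) (ip0l y)). Qed.

Lemma ip_sumr (I : Type) (r : seq I) (P : pred I) (F : I -> H) y :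
  ip y (\sum_(i <- r | P i) F i) = \sum_(i <- r | P i) ip y (F i).
Proof. exact: (big_morph (fun x => ip y x) (fun a b => ipDr y a b) (ip0r y)). Qed.

Lemma ReD (x y : R[i]) : Re (x + y) = Re x + Re y. Proof. by case: x => ? ?; case: y => ? ?. Qed.
Lemma ImD (x y : R[i]) : Im (x + y) = Im x + Im y. Proof. by case: x => ? ?; case: y => ? ?. Qed.
Lemma Re_sum (I : Type) (r : seq I) (P : pred I) (F : I -> R[i]) :
  Re (\sum_(i <- r | P i) F i) = \sum_(i <- r | P i) Re (F i).
Proof. exact: (big_morph Re ReD (erefl _)). Qed.
Lemma Im_sum (I : Type) (r : seq I) (P : pred I) (F : I -> R[i]) :
  Im (\sum_(i <- r | P i) F i) = \sum_(i <- r | P i) Im (F i).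
Proof. exact: (big_morph Im ImD (erefl _)). Qed.

Lemma ip_ge0 x : Im (ip x x) = 0 /\ 0 <= Re (ip x x).
Proof. by have := ip_ge0 Hs x; rewrite lecE /= => /andP[/eqP -> ->]. Qed.


Section Ops.
Variable T : op H.
Hypothesis hT : is_linear_op T.
Lemma linD x y : T (x + y) = T x + T y.
Proof. by have := hT 1 x y; rewrite !scale1r. Qed.
Lemma lin0 : T 0 = 0.
Proof.
have := linD 0 0; rewrite addr0 => h.
by apply: (@addrI _ (T 0)); rewrite -h addr0.
Qed.
Lemma linZ a x : T (a *: x) = a *: T x.
Proof. by have := hT a x 0; rewrite !addr0 lin0 addr0. Qed.
Lemma lin_sum (I : Type) (r : seq I) (P : pred I) (F : I -> H) :
  T (\sum_(i <- r | P i) F i) = \sum_(i <- r | P i) T (F i).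
Proof. exact: (big_morph T linD lin0). Qed.
End Ops.

Lemma adj_add T S T' S' : is_adj Hs T S -> is_adj Hs T' S' ->
  is_adj Hs (op_add T T') (op_add S S').
Proof. by move=> h h' x y; rewrite /op_add ipDl ipDr h h'. Qed.

Lemma adj_scale a T S : a^* = a -> is_adj Hs T S ->
  is_adj Hs (op_scale a T) (op_scale a S).
Proof. by move=> ha h x y; rewrite /op_scale ipZl ipZr h; congr (_ * _); exact: esym ha. Qed.

Lemma adj_zero : is_adj Hs (fun _ => 0) (fun _ => 0).
Proof. by move=> x y; rewrite ip0l ip0r. Qed.

Definition Qf (p : op H) n (Y : opmx H n) (v : 'I_n -> H) :=
  \sum_(i < n) ip (\sum_(j < n) p (Y i j (p (v j)))) (v i).

Lemma QD p n (Y Z : opmx H n) v : is_linear_op p ->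
  Qf p (mx_add Y Z) v = Qf p Y v + Qf p Z v.
Proof.
move=> hp; rewrite /Qf -big_split /=; apply: eq_bigr => i _.
rewrite -ipDl -big_split /=; congr (ip _ _); apply: eq_bigr => j _.
by rewrite /mx_add /op_add linD.
Qed.

Lemma QZ p n a (Y : opmx H n) v : is_linear_op p ->
  Qf p (mx_scale a Y) v = a * Qf p Y v.
Proof.
move=> hp; rewrite /Qf mulr_sumr; apply: eq_bigr => i _.
rewrite -ipZl scaler_sumr; congr (ip _ _); apply: eq_bigr => j _.
by rewrite /mx_scale /op_scale linZ.
Qed.

End Aux.

Section Main.
Variables (R : realType) (H : lmodType R[i]) (Hs : hilbert H).
Local Notation ip := (ip Hs).
Local Notation Re := (@complex.Re R).
Local Notation Im := (@complex.Im R).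
Variables (V : op H -> Prop).
Hypothesis hV : operator_system Hs V.

Lemma V_BH T : V T -> in_BH Hs T.
Proof. by case: hV => h *; apply: h. Qed.
Lemma V_add T S : V T -> V S -> V (op_add T S).
Proof. by case: hV => _ _ h *; apply: h. Qed.
Lemma V_scale a T : V T -> V (op_scale a T).
Proof. by case: hV => _ _ _ h *; apply: h. Qed.
Lemma V0 : V (fun _ => 0).
Proof.
have -> : (fun _ : H => 0) = op_scale 0 (@op_id R H).
  by apply: functional_extensionality => x; rewrite /op_scale scale0r.
by apply: V_scale; case: hV.
Qed.
Lemma V_sum (I : Type) (r : seq I) (F : I -> op H) :
  (forall i, V (F i)) -> V (fun x => \sum_(i <- r) F i x).
Proof.
move=> hF; elim: r => [|a r IH].
  have -> : (fun x : H => \sum_(i <- [::]) F i x) = (fun _ => 0).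
    by apply: functional_extensionality => x; rewrite big_nil.
  exact: V0.
have -> : (fun x : H => \sum_(i <- a :: r) F i x) =
   op_add (F a) (fun x => \sum_(i <- r) F i x).
  by apply: functional_extensionality => x; rewrite big_cons.
exact: V_add.
Qed.

Lemma congr_in n m (alpha : 'M[R[i]]_(n, m)) X : in_Mn V X -> in_Mn V (congr_mx alpha X).
Proof.
move=> hX k l; rewrite /congr_mx.
apply: (@V_sum _ _ (fun i x => \sum_(j < n) ((alpha i k)^* * alpha j l) *: X i j x)) => i.
apply: (@V_sum _ _ (fun j x => ((alpha i k)^* * alpha j l) *: X i j x)) => j.
exact: V_scale.
Qed.

Lemma congr_herm n m (alpha : 'M[R[i]]_(n, m)) X : Defs.hermitian Hs X ->
  Defs.hermitian Hs (congr_mx alpha X).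
Proof.
move=> hX k l x y; rewrite /congr_mx /= ip_suml ip_sumr.
under eq_bigr do rewrite ip_suml.
under [RHS]eq_bigr do rewrite ip_sumr.
rewrite [RHS]exchange_big /=.
apply: eq_bigr => i _; apply: eq_bigr => j _.
rewrite ipZl ipZr hX; congr (_ * _).
exact: conj_aux.
Qed.

Lemma congr_pos (p : op H) n m (alpha : 'M[R[i]]_(n, m)) (X : opmx H n)
  (hXl : forall i j, is_linear_op (X i j)) (hp : is_linear_op p) :
  (forall w, 0 <= Qf Hs p X w) -> forall v, 0 <= Qf Hs p (congr_mx alpha X) v.
Proof.
move=> hX v; have := hX (fun j => \sum_(l < m) alpha j l *: v l).
suff -> : Qf Hs p (congr_mx alpha X) v = Qf Hs p X (fun j => \sum_(l < m) alpha j l *: v l) by [].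
rewrite /Qf /congr_mx /=.
transitivity (\sum_(k < m) \sum_(l < m) \sum_(i < n) \sum_(j < n)
   ((alpha i k)^* * alpha j l * ip (p (X i j (p (v l)))) (v k))).
  apply: eq_bigr => k _; rewrite ip_suml; apply: eq_bigr => l _.
  rewrite (lin_sum hp) ip_suml; apply: eq_bigr => i _.
  rewrite (lin_sum hp) ip_suml; apply: eq_bigr => j _.
  by rewrite (linZ hp) ipZl.
symmetry.
transitivity (\sum_(i < n) \sum_(j < n) \sum_(l < m) \sum_(k < m)
   ((alpha i k)^* * alpha j l * ip (p (X i j (p (v l)))) (v k))).
  apply: eq_bigr => i _; rewrite ip_suml; apply: eq_bigr => j _.
  rewrite (lin_sum hp) (lin_sum (hXl i j)) (lin_sum hp) ip_suml.
  apply: eq_bigr => l _.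
  rewrite (linZ hp) (linZ (hXl i j)) (linZ hp) ipZl ip_sumr mulr_sumr.
  apply: eq_bigr => k _.
  by rewrite ipZr mulrA [alpha j l * _]mulrC.
under eq_bigr do rewrite exchange_big.
rewrite exchange_big.
under eq_bigr => l _ do under eq_bigr => i _ do rewrite exchange_big.
under eq_bigr do rewrite exchange_big.
by rewrite exchange_big.
Qed.

Lemma cconjN1 : (-1 : R[i])^* = -1.
Proof. by apply/eqP; rewrite eq_complex /= !oppr0 !eqxx. Qed.

Lemma cconj0 : (0 : R[i])^* = 0.
Proof. by rewrite /= oppr0. Qed.

Lemma conj_sum (I : Type) (r : seq I) (P : pred I) (F : I -> R[i]) :
  (\sum_(i <- r | P i) F i)^* = \sum_(i <- r | P i) (F i)^*.
Proof. exact: (big_morph (@conjc R) (@cconjD R) cconj0). Qed.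

Lemma Im_conj (z : R[i]) : z^* = z -> Im z = 0.
Proof.
case: z => a b /= [] h.
have : b + b = 0 by rewrite -{1}h addNr.
by rewrite -mulr2n -mulr_natr => /eqP; rewrite mulf_eq0 pnatr_eq0 orbF => /eqP.
Qed.

Lemma polar_aux (u w : R[i]) : u + w = 0 -> 'i^* * u + 'i * w = 0 -> u = 0.
Proof.
case: u => a b; case: w => c d /= [h1 h2] [h3 h4].
congr (_ +i* _); lra.
Qed.

Lemma ipNl x y : ip (- x) y = - ip x y.
Proof. by rewrite -scaleN1r ipZl mulN1r. Qed.

Lemma ImB (a b : R[i]) : Im (a + (-1) * b) = Im a - Im b.
Proof. by case: a => ? ?; case: b => ? ? /=; lra. Qed.
Lemma ReB (a b : R[i]) : Re (a + (-1) * b) = Re a - Re b.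
Proof. by case: a => ? ?; case: b => ? ? /=; lra. Qed.

Lemma ge0_ImRe (z : R[i]) : 0 <= z -> Im z = 0 /\ 0 <= Re z.
Proof. by rewrite lecE /= => /andP[/eqP -> ->]. Qed.

Lemma ople_facts (p q : op H) x : (forall x, p (p x) = p x) -> is_adj Hs p p -> op_le Hs p q ->
  Im (ip (q x) x) = Im (ip (p x) (p x)) /\ Re (ip (p x) (p x)) <= Re (ip (q x) x).
Proof.
move=> hpi hp hle; have := hle x; rewrite /op_add /op_scale ipDl ipZl.
have -> : ip (p x) x = ip (p x) (p x).
  by rewrite hp [RHS]hp hpi.
move=> /ge0_ImRe []; rewrite ImB ReB => h1 h2; split; lra.
Qed.

Lemma ring_aux1 (K : comRingType) (a b c d a' b' c' d' : K) :
  (b - b') + (c - c') = (a + b + (c + d) - (a' + b' + (c' + d'))) - (a - a') - (d - d').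
Proof. ring. Qed.

Lemma q_sa (p q : op H) : (forall x, p (p x) = p x) -> is_adj Hs p p ->
  is_linear_op q -> op_le Hs p q -> is_adj Hs q q.
Proof.
move=> hpi hp hq hle.
pose f x y := ip (q x) y - ip x (q y).
have f0 : forall x, f x x = 0.
  move=> x; have [h _] := ople_facts x hpi hp hle.
  have [h' _] := ip_ge0 Hs (p x).
  rewrite h' in h; rewrite /f (ipJ Hs x (q x)).
  case: (ip (q x) x) h => a b /= ->.
  by apply/eqP; rewrite eq_complex /=; apply/andP; split; apply/eqP; lra.
have fsym : forall x y, f x y + f y x = 0.
  move=> x y; have := f0 (x + y); rewrite /f (linD hq) !ipDl !ipDr => e.
  have ex := f0 x; have ey := f0 y; rewrite /f in ex ey.
  rewrite /f (ring_aux1 (ip (q x) x) _ _ (ip (q y) y) (ip x (q x)) _ _ (ip y (q y))).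
  by rewrite e ex ey !subr0.
move=> x y; apply/eqP; rewrite -subr_eq0; apply/eqP.
apply: (@polar_aux _ (f y x)); first exact: fsym.
have := fsym x ('i *: y); rewrite /f (linZ hq) ipZl ipZr ipZl ipZr.
by rewrite /f !mulrBr.
Qed.

Lemma Qform (p : op H) n (X : opmx H n) v : is_adj Hs p p ->
  Qf Hs p X v = \sum_(i < n) \sum_(j < n) ip (X i j (p (v j))) (p (v i)).
Proof.
move=> hp; rewrite /Qf; apply: eq_bigr => i _; rewrite ip_suml.
by apply: eq_bigr => j _; apply: hp.
Qed.

Lemma ImQ (p : op H) n (X : opmx H n) v : is_adj Hs p p -> Defs.hermitian Hs X ->
  Im (Qf Hs p X v) = 0.
Proof.
move=> hp hX; rewrite Qform //; apply: Im_conj.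
have e : forall i j, (ip (X i j (p (v j))) (p (v i)))^* = ip (X j i (p (v i))) (p (v j)).
  by move=> i j; rewrite (hX j i) (ipJ Hs (p (v i))).
rewrite [RHS]exchange_big; apply: (etrans (conj_sum _ _ _)).
apply: eq_bigr => i _; apply: (etrans (conj_sum _ _ _)).
by apply: eq_bigr => j _; apply: e.
Qed.

Lemma ampl_V q n i j : V q -> V (@ampl R H q n i j).
Proof. by move=> hq; rewrite /ampl; case: eqP => _ //; exact: V0. Qed.

Lemma ampl_adj q n i j : is_adj Hs q q -> is_adj Hs (@ampl R H q n i j) (@ampl R H q n j i).
Proof. by move=> hq; rewrite /ampl eq_sym; case: eqP => _ //; exact: adj_zero. Qed.

Lemma Q_ampl (p q : op H) n v : is_linear_op p ->
  Qf Hs p (@ampl R H q n) v = \sum_(i < n) ip (p (q (p (v i)))) (v i).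
Proof.
move=> hp; rewrite /Qf; apply: eq_bigr => i _; congr (ip _ _).
rewrite (bigD1 i) //= /ampl eqxx big1 ?addr0 // => j hj.
by rewrite eq_sym (negbTE hj) (lin0 hp).
Qed.

Lemma B_facts (p q : op H) n (v : 'I_n -> H) : (forall x, p (p x) = p x) -> is_adj Hs p p ->
  op_le Hs p q ->
  Im (\sum_(i < n) ip (p (q (p (v i)))) (v i)) = 0 /\
  \sum_(i < n) Re (ip (p (v i)) (p (v i))) <= Re (\sum_(i < n) ip (p (q (p (v i)))) (v i)).
Proof.
move=> hpi hp hle; rewrite Im_sum Re_sum; split.
  apply: big1 => i _; rewrite hp.
  have [h _] := ople_facts (p (v i)) hpi hp hle.
  by rewrite h hpi; case: (ip_ge0 Hs (p (v i))).
apply: ler_sum => i _; rewrite (hp (q (p (v i)))).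
have [_ h] := ople_facts (p (v i)) hpi hp hle.
by rewrite hpi in h.
Qed.

Lemma ipNr x y : ip x (- y) = - ip x y.
Proof. by apply/eqP; rewrite -addr_eq0 -ipDr addNr ip0r. Qed.

Lemma Re_aux (u w z : R[i]) : Re (u + w - (z + z^*)) = Re u + Re w - (Re z + Re z).
Proof. by case: u => ? ?; case: w => ? ?; case: z => ? ? /=. Qed.

Lemma two_re a b : Re (ip a b) + Re (ip a b) <= Re (ip a a) + Re (ip b b).
Proof.
have [_ h] := ip_ge0 Hs (a - b).
have e : ip (a - b) (a - b) = ip a a + ip b b - (ip a b + (ip a b)^*).
  rewrite ipDl !ipDr !ipNl !ipNr (ipJ Hs b a); ring.
rewrite e Re_aux in h; lra.
Qed.

Lemma term_le_sum n (F : 'I_n -> R) i : (forall j, 0 <= F j) -> F i <= \sum_j F j.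
Proof. by move=> h; rewrite (bigD1 i) //= lerDl sumr_ge0. Qed.

Lemma QX_bound (p : op H) n (X : opmx H n) (K : R) : is_adj Hs p p -> 1 <= K ->
  (forall i j x, Re (ip (X i j x) (X i j x)) <= K * Re (ip x x)) -> forall v,
  Re (Qf Hs p X v) <= ((K *+ n) *+ n) * \sum_(i < n) Re (ip (p (v i)) (p (v i))).
Proof.
move=> hp hK hX v; rewrite Qform // Re_sum.
set N := \sum_(i < n) Re (ip (p (v i)) (p (v i))).
have hN0 : 0 <= N by apply: sumr_ge0 => i _; case: (ip_ge0 Hs (p (v i))).
have hN : forall i, Re (ip (p (v i)) (p (v i))) <= N.
  by move=> i; apply: (@term_le_sum n (fun i => Re (ip (p (v i)) (p (v i)))) i) => j; case: (ip_ge0 Hs (p (v j))).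
have t : forall i j, Re (ip (X i j (p (v j))) (p (v i))) <= K * N.
  move=> i j; have h1 := two_re (X i j (p (v j))) (p (v i)).
  have h2 := hX i j (p (v j)); have h3 := hN i; have h4 := hN j.
  have [_ h5] := ip_ge0 Hs (p (v j)); have [_ h6] := ip_ge0 Hs (p (v i)).
  have h7 : K * Re (ip (p (v j)) (p (v j))) <= K * N.
    by apply: ler_wpM2l => //; apply: le_trans hK.
  have h8 : N <= K * N by apply: ler_peMl.
  lra.
apply: (le_trans (y := \sum_(i < n) \sum_(j < n) (K * N))).
  by apply: ler_sum => i _; rewrite Re_sum; apply: ler_sum => j _; apply: t.
rewrite !sumr_const !card_ord.
by rewrite !mulrnAl.
Qed.

Lemma fin_bound n (P : 'I_n -> 'I_n -> R -> Prop) :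
  (forall i j M M', P i j M -> M <= M' -> P i j M') ->
  (forall i j, exists M, P i j M) -> exists K, 1 <= K /\ forall i j, P i j K.
Proof.
move=> mono h.
pose f i j := proj1_sig (constructive_indefinite_description _ (h i j)).
have hf : forall i j, P i j (f i j).
  by move=> i j; rewrite /f; case: (constructive_indefinite_description _ _).
exists (1 + \sum_i \sum_j `|f i j|); split.
  by rewrite lerDl; apply: sumr_ge0 => i _; apply: sumr_ge0.
move=> i j; apply: (mono _ _ _ _ (hf i j)).
apply: (le_trans (y := \sum_i \sum_j `|f i j|)); last by rewrite lerDr.
apply: (le_trans (y := \sum_j `|f i j|)).
  apply: le_trans (ler_norm _) _.
  by apply: (@term_le_sum n (fun j => `|f i j|) j) => k.
apply: (@term_le_sum n (fun i => \sum_j `|f i j|) i) => k.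
by apply: sumr_ge0.
Qed.

Lemma ReMC (M : R) (z : R[i]) : Re (M%:C * z) = M * Re z.
Proof. by case: z => a b /=; ring. Qed.

Lemma bounded_Re (T : op H) : is_bounded_op Hs T ->
  exists M, forall x, Re (ip (T x) (T x)) <= M * Re (ip x x).
Proof.
case=> M hM; exists M => x; have := hM x; rewrite lecE => /andP[_].
by rewrite ReMC.
Qed.

Lemma fin_a (A B : R[i]) (r c N : R) : Im A = 0 -> Im B = 0 -> Re A <= c * N ->
  N <= Re B -> 0 <= N -> 0 <= c -> r = c + 1 -> 0 <= r%:C * B + (-1) * A.
Proof.
case: A => a1 a2; case: B => b1 b2 /= -> -> hA hB hN hc ->.
rewrite lecE /=; apply/andP; split; first by apply/eqP; lra.
have : c * N <= c * b1 by apply: ler_wpM2l.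
nra.
Qed.

Lemma fin_b (A B : R[i]) : Im B = 0 -> 0 <= Re B ->
  (forall eps : R, 0 < eps -> 0 <= A + eps%:C * B) -> 0 <= A.
Proof.
case: A => a b; case: B => c d /= -> hc h.
have := h 1 ltr01; rewrite lecE /= => /andP[/eqP hb _].
have hb0 : b = 0 by lra.
rewrite lecE /= hb0 eqxx /=.
case: (lerP 0 a) => // ha.
pose e := - a / (c + 1).
have hc1 : c + 1 != 0 by rewrite gt_eqF // ltr_wpDl.
have he : 0 < e by rewrite /e divr_gt0 // ?oppr_gt0 // ltr_wpDl.
have ee : e * c + e = - a by rewrite -[X in _ + X]mulr1 -mulrDr /e divfK.
have := h e he; rewrite lecE /= => /andP[_ hh].
lra.
Qed.

End Main.

Theorem proposition3p1 (R : realType) (H : lmodType R[i]) (Hs : hilbert H)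
    (V : op H -> Prop) (p : op H) :
  operator_system Hs V -> V p -> projection Hs p ->
  matrix_ordering Hs V (Cp Hs V p) /\
  (forall q : op H, V q -> op_le Hs p q -> op_le Hs q (@op_id R H) ->
     archimedean_unit Hs V (Cp Hs V p) q).
Proof.
move=> hV hpV [[hpl _] hpi hp].
split.
  split.
  - by move=> n X [].
  - move=> n; split.
    + move=> X Y [h1 h2 h3] [g1 g2 g3]; split.
      * by move=> i j; apply: (V_add hV).
      * by move=> i j; apply: adj_add.
      * move=> v; change (0 <= Qf Hs p (mx_add X Y) v).
        by rewrite QD //; apply: addr_ge0; [apply: h3 | apply: g3].
    + move=> t X ht [h1 h2 h3]; split.
      * by move=> i j; apply: (V_scale hV).
      * by move=> i j; apply: adj_scale => //=; rewrite oppr0.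
      * move=> v; change (0 <= Qf Hs p (mx_scale t%:C X) v).
        by rewrite QZ //; apply: mulr_ge0; [rewrite ler0c | apply: h3].
  - move=> n m alpha X [h1 h2 h3]; split.
    + exact: (congr_in hV).
    + exact: congr_herm.
    + move=> v; change (0 <= Qf Hs p (congr_mx alpha X) v).
      apply: (@congr_pos R H Hs p n m alpha X _ hpl) => [i j|w]; first by case: (V_BH hV (h1 i j)).
      exact: (h3 w).
move=> q hq hpq _.
have hql := (V_BH hV hq).1.
have hqa := q_sa hpi hp hql hpq.
split.
  move=> n X hin hh.
  have mono : forall i j (M M' : R),
      (forall x, complex.Re (ip Hs (X i j x) (X i j x)) <= M * complex.Re (ip Hs x x)) -> M <= M' ->
      (forall x, complex.Re (ip Hs (X i j x) (X i j x)) <= M' * complex.Re (ip Hs x x)).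
    move=> i j M M' h hle x; apply: le_trans (h x) _; apply: ler_wpM2r => //.
    by case: (ip_ge0 Hs x).
  have [K [hK hKb]] := @fin_bound R n
    (fun i j M => forall x, complex.Re (ip Hs (X i j x) (X i j x)) <= M * complex.Re (ip Hs x x)) mono
    (fun i j => bounded_Re (V_BH hV (hin i j)).2).
  pose c := (K *+ n) *+ n.
  have hc : 0 <= c by rewrite /c !mulrn_wge0 // (le_trans _ hK).
  exists (c + 1); first by rewrite ltr_wpDl.
  split.
  - move=> i j; apply: (V_add hV); apply: (V_scale hV) => //; exact: (ampl_V hV).
  - move=> i j; apply: adj_add; apply: adj_scale.
    + by rewrite /= oppr0.
    + exact: ampl_adj.
    + exact: cconjN1.
    + exact: hh.
  - move=> v; change (0 <= Qf Hs p (mx_add (mx_scale (c + 1)%:C (@ampl R H q n)) (mx_scale (-1) X)) v).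
    rewrite QD // !QZ // Q_ampl //.
    have [hB1 hB2] := B_facts v hpi hp hpq.
    apply: (fin_a (c := c) (N := \sum_(i < n) complex.Re (ip Hs (p (v i)) (p (v i))))) => //.
    + exact: ImQ.
    + exact: QX_bound.
    + by apply: sumr_ge0 => i _; case: (ip_ge0 Hs (p (v i))).
move=> n X hin hh heps; split => //.
move=> v; change (0 <= Qf Hs p X v).
have [hB1 hB2] := B_facts v hpi hp hpq.
apply: (fin_b hB1).
  by apply: le_trans hB2; apply: sumr_ge0 => i _; case: (ip_ge0 Hs (p (v i))).
move=> eps he; have [_ _ h3] := heps eps he.
have h4 : 0 <= Qf Hs p (mx_add X (mx_scale eps%:C (@ampl R H q n))) v := h3 v.
by rewrite QD // QZ // Q_ampl in h4.
Qed.
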